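(* Let $a,d\in\mathbb N$, $\mu\in\mathbb R$, $\delta=\mu\sigma_d$, and let $\chi$ be a dominant weight with $\chi+\rho+\delta\in\mathbf V^a(1,d)$; let $e=e(\chi)$. Then for every $1\le l\le d$ we have $p_l(\chi)\ge p(\chi)$, and the inequality is strict if $l>e$.
   Context: $M(d)$: character lattice of the diagonal torus of $GL(d)$ with coordinate characters $\beta_i$; dominant means $c_1\le\dots\le c_d$ for $\sum c_i\beta_i$; $\rho=\frac12\sum_{j<i}(\beta_i-\beta_j)$, $\sigma_d=\sum\beta_i$; $\mathbf V^a(1,d)=\frac32\mathrm{sum}[0,\beta_i-\beta_j]+\frac a2\mathrm{sum}[-\beta_k,\beta_k]+\mathrm{sum}[-\beta_k,0]$ (Minkowski sums over all $i,j,k$). For such $\chi$, $\chi+\rho+\delta$ is strictly dominant and lies in $\mathbf V^a(1,d)$, and $e(\chi)$ is the unique $0\le e\le d$ such that $\chi+\rho+\delta=\sum_{j<i\le e}c_{ij}(\beta_i-\beta_j)+\sum_{e<j<i}c_{ij}(\beta_i-\beta_j)+\sum_{j\le e<i}\frac32(\beta_i-\beta_j)+\sum_ic_i\beta_i$ with $0\le c_{ij}\le\frac32$, $-\frac{a+2}2\le c_i\le-\frac a2$ for $i\le e$, $-\frac a2<c_i\le\frac a2$ for $i>e$. For a weight $\psi$ and $1\le l\le d$, writing $\psi+\rho+\delta=\sum b_i\beta_i$, put $p_l(\psi):=\sum_{i\le l}b_i+\frac32l(d-l)+\frac a2l$, and $p(\chi):=p_{e(\chi)}(\chi)$ (which equals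 $\sum_{i\le e}(c_i+\frac a2)\le0$). *)

(* Defs.v *)
(* Weights of the diagonal torus of GL(d) are row vectors
   in 'rV[R]_d; beta i is the i-th coordinate character (indices 0-based:
   paper index k corresponds to i = k-1). *)
From HB Require Import structures.
From mathcomp Require Import all_boot all_order all_algebra.
Set Implicit Arguments. Unset Strict Implicit. Unset Printing Implicit Defensive.
Import Order.TTheory GRing.Theory Num.Theory.
Local Open Scope ring_scope.

Section Defs.
Variables (R : realFieldType) (d : nat).

Definition beta (i : 'I_d) : 'rV[R]_d := delta_mx 0 i.

Definition wvec (chi : 'I_d -> int) : 'rV[R]_d := \row_k (chi k)%:~R.

Definition dominant (chi : 'I_d -> int) : Prop :=
  forall i j : 'I_d, (i <= j)%N -> (chi i <= chi j)%R.

Definition rho : 'rV[R]_d :=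
  2^-1 *: \sum_(i : 'I_d) \sum_(j : 'I_d | (j < i)%N) (beta i - beta j).

Definition sigma : 'rV[R]_d := \sum_(i : 'I_d) beta i.
Definition deltaw (mu : R) : 'rV[R]_d := mu *: sigma.

Definition shifted (mu : R) (chi : 'I_d -> int) : 'rV[R]_d :=
  wvec chi + rho + deltaw mu.

(* membership in V^a(1,d) = 3/2 sum[0,beta_i-beta_j] + a/2 sum[-beta_k,beta_k]
   + sum[-beta_k,0], Minkowski sums over all i,j,k. *)
Definition in_Va (a : nat) (v : 'rV[R]_d) : Prop :=
  exists (t : 'I_d -> 'I_d -> R) (s r : 'I_d -> R),
    (forall i j, 0 <= t i j <= 1) /\
    (forall k, -1 <= s k <= 1) /\
    (forall k, -1 <= r k <= 0) /\
    v = (3 / 2) *: (\sum_(i : 'I_d) \sum_(j : 'I_d) t i j *: (beta i - beta j))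
        + (a%:R / 2) *: (\sum_(k : 'I_d) s k *: beta k)
        + \sum_(k : 'I_d) r k *: beta k.

(* e is (the) number e(chi) from the decomposition in the paper.
   1-based "i <= e" is 0-based "i < e". *)
Definition is_e (a : nat) (mu : R) (chi : 'I_d -> int) (e : nat) : Prop :=
  (e <= d)%N /\
  exists (c2 : 'I_d -> 'I_d -> R) (c1 : 'I_d -> R),
    (forall i j, 0 <= c2 i j <= 3 / 2) /\
    (forall i : 'I_d, (i < e)%N -> - ((a%:R + 2) / 2) <= c1 i <= - (a%:R / 2)) /\
    (forall i : 'I_d, (e <= i)%N -> - (a%:R / 2) < c1 i <= a%:R / 2) /\
    shifted mu chi =
      \sum_(i : 'I_d) \sum_(j : 'I_d | (j < i)%N && (i < e)%N)
          c2 i j *: (beta i - beta j)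
      + \sum_(i : 'I_d) \sum_(j : 'I_d | (e <= j)%N && (j < i)%N)
          c2 i j *: (beta i - beta j)
      + \sum_(i : 'I_d) \sum_(j : 'I_d | (j < e)%N && (e <= i)%N)
          (3 / 2) *: (beta i - beta j)
      + \sum_(i : 'I_d) c1 i *: beta i.

Definition p_l (a : nat) (mu : R) (psi : 'I_d -> int) (l : nat) : R :=
  \sum_(i : 'I_d | (i < l)%N) (shifted mu psi) 0 i
  + (3 / 2) * (l%:R * (d%:R - l%:R)) + (a%:R / 2) * l%:R.

End Defs.

(* Main.v *)
Require Import Defs.
From HB Require Import structures.
From mathcomp Require Import all_boot all_order all_algebra.
From mathcomp Require Import zify ring lra.
Import Order.TTheory GRing.Theory Num.Theory.
Set Implicit Arguments. Unset Strict Implicit.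
Local Open Scope ring_scope.

Section S.
Variables (R : realFieldType) (d : nat).
Definition ind (b : bool) : R := if b then 1 else 0.
Definition phi (l : nat) (v : 'rV[R]_d) : R := \sum_(k : 'I_d) v 0 k * ind (k < l)%N.

Lemma phiD l u v : phi l (u + v) = phi l u + phi l v.
Proof. rewrite /phi -big_split; apply: eq_bigr => k _; by rewrite !mxE mulrDl. Qed.
Lemma phiN l u : phi l (- u) = - phi l u.
Proof. rewrite /phi -sumrN; apply: eq_bigr => k _; rewrite !mxE; by rewrite mulNr. Qed.
Lemma phiB l u v : phi l (u - v) = phi l u - phi l v.
Proof. by rewrite phiD phiN. Qed.
Lemma phiZ l c u : phi l (c *: u) = c * phi l u.
Proof. rewrite /phi mulr_sumr; apply: eq_bigr => k _; rewrite !mxE; by rewrite mulrA. Qed.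
Lemma phi_sum l (I : Type) (r : seq I) (P : pred I) (F : I -> 'rV[R]_d) :
  phi l (\sum_(i <- r | P i) F i) = \sum_(i <- r | P i) phi l (F i).
Proof.
elim/big_rec2: _ => [|i y1 y2 _ <-]; last by rewrite phiD.
by rewrite /phi big1 // => k _; rewrite mxE mul0r.
Qed.
Lemma phi_beta l i : phi l (@beta R d i) = ind (i < l)%N.
Proof.
rewrite /phi (bigD1 i) //= big1 ?addr0.
  by rewrite /beta mxE !eqxx mul1r.
by move=> k /negbTE ki; rewrite /beta mxE eqxx /= ki mul0r.
Qed.

Lemma sum_ind_lt l : (l <= d)%N -> \sum_(j : 'I_d) ind (j < l)%N = l%:R.
Proof.
move=> Hl.
rewrite -(big_mkord xpredT (fun j => ind (j < l)%N)) (@big_cat_nat _ _ _ l 0 d _ _ (leq0n l) Hl) /=.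
rewrite [X in _ + X]big1_seq ?addr0; last first.
  by move=> i /andP[_]; rewrite mem_index_iota => /andP[]; rewrite leqNgt => /negbTE ->.
rewrite (eq_big_nat _ _ (F2 := fun _ => 1)); last by move=> i /andP[_ ->].
by rewrite sumr_const_nat subn0.
Qed.

Lemma count_pairs l : (l <= d)%N ->
  \sum_(i : 'I_d) \sum_(j : 'I_d) ind (j < i)%N * (ind (i < l)%N - ind (j < l)%N)
  = - (l%:R * (d%:R - l%:R)).
Proof.
move=> Hl.
transitivity (\sum_(i : 'I_d) \sum_(j : 'I_d) - ((1 - ind (i < l)%N) * ind (j < l)%N)).
  apply: eq_bigr => i _; apply: eq_bigr => j _.
  rewrite /ind; case: (ltnP j i) => ?; case: (ltnP i l) => ?; case: (ltnP j l) => ?;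
    try (exfalso; lia); ring.
under eq_bigr => i _ do rewrite sumrN -mulr_sumr sum_ind_lt //; rewrite sumrN.
rewrite -mulr_suml sumrB sumr_const card_ord sum_ind_lt //.
rewrite -[in LHS]mulr_natl.
ring.
Qed.
End S.

Definition B (R : realFieldType) (c : R) (e i j : nat) : R :=
  (if (j < i)%N && (i < e)%N then c else 0)
  + (if (e <= j)%N && (j < i)%N then c else 0)
  + (if (j < e)%N && (e <= i)%N then 3/2 else 0).

Arguments B {R}.
Lemma B_nonneg (R : realFieldType) (c : R) e l i j : 0 <= c <= 3/2 ->
  0 <= (B c e i j - 3/2 * ind R (j < i)%N) * (ind R (i < l)%N - ind R (j < l)%N).
Proof.
move=> /andP[c0 c1]; rewrite /B /ind.
case: (ltnP j i) => ?; case: (ltnP i e) => ?; case: (ltnP j e) => ?;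
 case: (ltnP i l) => ?; case: (ltnP j l) => ? /=; try (exfalso; lia); lra.
Qed.

Lemma B_zero (R : realFieldType) (c : R) e i j :
  (B c e i j - 3/2 * ind R (j < i)%N) * (ind R (i < e)%N - ind R (j < e)%N) = 0.
Proof.
rewrite /B /ind.
case: (ltnP j i) => ?; case: (ltnP i e) => ?; case: (ltnP j e) => ? /=;
  try (exfalso; lia); ring.
Qed.

Lemma phi_dsum (R : realFieldType) (d l : nat) (P : 'I_d -> 'I_d -> bool) (c : 'I_d -> 'I_d -> R) :
  phi l (\sum_(i : 'I_d) \sum_(j : 'I_d | P i j) c i j *: (@beta R d i - beta R j))
  = \sum_(i : 'I_d) \sum_(j : 'I_d) (if P i j then c i j else 0) * (ind R (i < l)%N - ind R (j < l)%N).
Proof.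
rewrite phi_sum; apply: eq_bigr => i _.
rewrite phi_sum big_mkcond /=; apply: eq_bigr => j _.
case: ifP => _; last by rewrite mul0r.
by rewrite phiZ phiB !phi_beta.
Qed.

Lemma phi_ssum (R : realFieldType) (d l : nat) (c : 'I_d -> R) :
  phi l (\sum_(i : 'I_d) c i *: @beta R d i) = \sum_(i : 'I_d) c i * ind R (i < l)%N.
Proof. rewrite phi_sum; apply: eq_bigr => i _; by rewrite phiZ phi_beta. Qed.

Theorem lemma3p6 (R : realFieldType) (a d : nat) (mu : R)
    (chi : 'I_d -> int) (e : nat) :
  dominant chi ->
  in_Va a (shifted mu chi) ->
  is_e a mu chi e ->
  forall l : nat, (1 <= l <= d)%N ->
    p_l a mu chi e <= p_l a mu chi l /\
    ((e < l)%N -> p_l a mu chi e < p_l a mu chi l).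
Proof.
move=> _ _ [Hed [c2 [c1 [Hc2 [Hc1a [Hc1b Heq]]]]]].
pose N l := \sum_(i : 'I_d) \sum_(j : 'I_d)
   (B (c2 i j) e i j - 3/2 * ind R (j < i)%N) * (ind R (i < l)%N - ind R (j < l)%N).
pose C l := \sum_(i : 'I_d) (c1 i + a%:R / 2) * ind R (i < l)%N.
have key : forall l, (l <= d)%N -> p_l a mu chi l = N l + C l.
  move=> l Hl; rewrite /p_l.
  have -> : \sum_(i : 'I_d | (i < l)%N) shifted mu chi 0 i = phi l (shifted mu chi).
    rewrite /phi big_mkcond /=; apply: eq_bigr => k _.
    by rewrite /ind; case: ifP => _; rewrite ?mulr1 ?mulr0.
  rewrite Heq !phiD !phi_dsum phi_ssum.
  have -> : 3 / 2 * (l%:R * (d%:R - l%:R)) = - (3/2) *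
     \sum_(i : 'I_d) \sum_(j : 'I_d) ind R (j < i)%N * (ind R (i < l)%N - ind R (j < l)%N).
    rewrite count_pairs //; ring.
  have -> : a%:R / 2 * l%:R = \sum_(i : 'I_d) a%:R / 2 * ind R (i < l)%N.
    by rewrite -mulr_sumr sum_ind_lt.
  rewrite /N /C -big_split /= mulr_sumr -!big_split /=; apply: eq_bigr => i _.
  rewrite mulr_sumr.
  have -> : \sum_(j : 'I_d) (B (c2 i j) e i j - 3/2 * ind R (j < i)%N) * (ind R (i < l)%N - ind R (j < l)%N)
    = \sum_(j : 'I_d) (if (j < i)%N && (i < e)%N then c2 i j else 0) * (ind R (i < l)%N - ind R (j < l)%N)
    + \sum_(j : 'I_d) (if (e <= j)%N && (j < i)%N then c2 i j else 0) * (ind R (i < l)%N - ind R (j < l)%N)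
    + \sum_(j : 'I_d) (if (j < e)%N && (e <= i)%N then 3/2 else 0) * (ind R (i < l)%N - ind R (j < l)%N)
    + \sum_(j : 'I_d) - (3/2) * (ind R (j < i)%N * (ind R (i < l)%N - ind R (j < l)%N)).
    rewrite -!big_split /=; apply: eq_bigr => j _; rewrite /B.
    move: (if _ then _ else _) (if _ then _ else _) (if _ then _ else _) => x y z.
    move: (ind R _) (ind R _) (ind R _) => u v w. ring.
  ring.
have Ne : N e = 0.
  by rewrite /N big1 // => i _; rewrite big1 // => j _; rewrite B_zero.
have Nl : forall l, 0 <= N l.
  move=> l; apply: sumr_ge0 => i _; apply: sumr_ge0 => j _; exact: B_nonneg.
have CD : forall l, C l - C e = \sum_(i : 'I_d) (c1 i + a%:R / 2) * (ind R (i < l)%N - ind R (i < e)%N).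
  by move=> l; rewrite /C -sumrB; apply: eq_bigr => i _; rewrite mulrBr.
have Ct : forall l (i : 'I_d), 0 <= (c1 i + a%:R / 2) * (ind R (i < l)%N - ind R (i < e)%N).
  move=> l i; rewrite /ind; case: (ltnP i e) => hie.
    have := Hc1a i hie; case: (i < l)%N; lra.
  have := Hc1b i hie; case: (i < l)%N; lra.
move=> l /andP[Hl1 Hl]; rewrite !key // Ne add0r; split.
  have : 0 <= C l - C e by rewrite CD; apply: sumr_ge0 => i _; exact: Ct.
  have := Nl l; lra.
move=> Hel.
have Hed' : (e < d)%N by apply: leq_trans Hel Hl.
have : 0 < C l - C e.
  rewrite CD (bigD1 (Ordinal Hed')) //=.
  apply: ltr_pwDl; last by apply: sumr_ge0 => i _; exact: Ct.
  have := Hc1b (Ordinal Hed') (leqnn e); rewrite /ind /= Hel ltnn; lra.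
have := Nl l; lra.
Qed.
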